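(* The set $\mathcal{I}_{\mathrm{str}}(\Omega_1)$ has the cardinality of the continuum.
   Context: Let $\mathbf{2}=\{0,1\}$. A partial function of arity $n$ on $\mathbf{2}$ is a map $f:\operatorname{dom} f\to\mathbf{2}$ with $\operatorname{dom} f\subseteq \mathbf{2}^n$; it is total if $\operatorname{dom} f=\mathbf{2}^n$. $P_{\mathbf{2}}$ is the set of all partial functions, $O_{\mathbf{2}}$ the set of total ones. Composition $F=f(g_1,\dots,g_n)$ is given by $F(\mathbf{x})=f(g_1(\mathbf{x}),\dots,g_n(\mathbf{x}))$ on $\operatorname{dom} F=\{\mathbf{x}\in\bigcap_i\operatorname{dom} g_i : (g_1(\mathbf{x}),\dots,g_n(\mathbf{x}))\in\operatorname{dom} f\}$. A partial clone is a composition-closed subset of $P_{\mathbf{2}}$ containing all projections; a total clone is one contained in $O_{\mathbf{2}}$. A partial clone $X$ is strong if it contains every restriction of each of its members. For a total clone $C$, $\mathcal{I}_{\mathrm{str}}(C)$ is the set of all strong partial clones $X$ with $X\cap O_{\mathbf{2}}=C$. $\Omega_1$ is the total clone generated by all unary total Boolean functions. *)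

(* Defs.v *)
From mathcomp Require Import all_boot.
From mathcomp Require Import boolp classical_sets cardinality.
Set Implicit Arguments. Unset Strict Implicit. Unset Printing Implicit Defensive.

(* Body of a partial Boolean function of arity n : 2^n -> 2 ∪ {undefined}.
   [f x = None] means x ∉ dom f. *)
Definition ppfun (n : nat) := {ffun {ffun 'I_n -> bool} -> option bool}.

Definition pfun := {k : nat & ppfun k.+1}.

Definition mkpf (k : nat) (f : ppfun k.+1) : pfun := existT _ k f.

Definition total (f : pfun) : Prop := forall x, projT2 f x <> None.

Definition proj (n : nat) (i : 'I_n) : ppfun n := [ffun x : {ffun 'I_n -> bool} => Some (x i)].

Definition comp (m n : nat) (f : ppfun n) (gs : 'I_n -> ppfun m) : ppfun m :=
  [ffun x : {ffun 'I_m -> bool} => if [forall i, gs i x != None]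
             then f [ffun i => odflt false (gs i x)] else None].

Definition partial_clone (X : set pfun) : Prop :=
  (forall k (i : 'I_k.+1), X (mkpf (proj i))) /\
  (forall m n (f : ppfun n.+1) (gs : 'I_n.+1 -> ppfun m.+1),
      X (mkpf f) -> (forall i, X (mkpf (gs i))) -> X (mkpf (comp f gs))).

Definition total_clone (C : set pfun) : Prop :=
  partial_clone C /\ (forall f, C f -> total f).

Definition restriction_of k (g f : ppfun k.+1) : Prop :=
  forall x, g x <> None -> g x = f x.

Definition strong_partial_clone (X : set pfun) : Prop :=
  partial_clone X /\
  (forall k (f g : ppfun k.+1), X (mkpf f) -> restriction_of g f -> X (mkpf g)).

Definition I_str (C : set pfun) : set (set pfun) :=
  [set X | strong_partial_clone X /\ (forall f, (X f /\ total f) <-> C f)].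

Definition unary_total (f : pfun) : Prop := projT1 f = 0%N /\ total f.

Definition Omega1 : set pfun :=
  [set f | forall C, total_clone C -> (forall u, unary_total u -> C u) -> C f].

(* Main.v *)
Require Import Defs.
From mathcomp Require Import all_boot zify.
From mathcomp Require Import boolp classical_sets cardinality.
Set Implicit Arguments. Unset Strict Implicit. Unset Printing Implicit Defensive.

Definition pres h (R : {ffun 'I_h -> bool} -> Prop) n (f : ppfun n) :=
  forall M : 'I_h -> {ffun 'I_n -> bool},
    (forall j : 'I_n, R [ffun i => M i j]) ->
    (forall i, f (M i) <> None) ->
    R [ffun i => odflt false (f (M i))].

Lemma pres_proj h R n (i : 'I_n) : @pres h R n (Defs.proj i).
Proof.
move=> M HM _; have -> : [ffun j => odflt false (proj i (M j))] = [ffun j => M j i].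
  by apply/ffunP=> j; rewrite !ffunE.
exact: HM.
Qed.

Lemma pres_comp h R m n (f : ppfun n) (gs : 'I_n -> ppfun m) :
  pres R f -> (forall i, pres R (gs i)) -> @pres h R m (Defs.comp f gs).
Proof.
move=> Hf Hg M HM Hd.
have Hd1 a : [forall i, gs i (M a) != None].
  by move: (Hd a); rewrite ffunE; case: ifP.
pose N a := [ffun i => odflt false (gs i (M a))].
have HN : forall a, Defs.comp f gs (M a) = f (N a).
  by move=> a; rewrite ffunE Hd1.
have -> : [ffun i => odflt false (Defs.comp f gs (M i))] = [ffun i => odflt false (f (N i))].
  by apply/ffunP=> a; rewrite [LHS]ffunE [RHS]ffunE HN.
apply: Hf.
- move=> i; have -> : [ffun a => N a i] = [ffun a => odflt false (gs i (M a))].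
    by apply/ffunP=> a; rewrite !ffunE.
  apply: Hg => // a; move/forallP: (Hd1 a) => /(_ i); by case: (gs i (M a)).
- by move=> a; move: (Hd a); rewrite HN.
Qed.

Lemma pres_restr h R k (f g : ppfun k.+1) :
  restriction_of g f -> @pres h R _ f -> pres R g.
Proof.
move=> Hr Hf M HM Hd.
have E a : g (M a) = f (M a) by apply: Hr; apply: Hd.
have -> : [ffun i => odflt false (g (M i))] = [ffun i => odflt false (f (M i))].
  by apply/ffunP=> a; rewrite !ffunE E.
by apply: Hf => // a; rewrite -E.
Qed.

Definition rho (t : {ffun 'I_4 -> bool}) : Prop :=
  t (inord 0) = t (inord 1) \/ t (inord 2) = t (inord 3).

Definition Wq (q w : nat) : Prop := w = 0 \/ w = 2 \/ w = q - 2 \/ w = q.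

Definition sgm q (t : {ffun 'I_q -> bool}) : Prop := Wq q #|[set i | t i]|.
Arguments sgm : clear implicits.

Definition bclosed h (R : {ffun 'I_h -> bool} -> Prop) :=
  forall t (c : bool -> bool), R t -> R [ffun i => c (t i)].

Lemma rho_closed : bclosed rho.
Proof. by move=> t c; rewrite /rho !ffunE => -[->|->]; [left|right]. Qed.

Lemma sgm_closed q : bclosed (sgm q).
Proof.
move=> t c; rewrite /sgm /Wq.
have Hle : #|[set i | t i]| <= q by apply: leq_trans (max_card _) _; rewrite card_ord.
case Ht: (c true); case Hf: (c false).
- have -> : [set i | [ffun i => c (t i)] i] = [set: 'I_q]%SET.
    by apply/setP=> i; rewrite !inE ffunE; case: (t i).
  by rewrite cardsT card_ord; lia.
- have -> : [set i | [ffun i => c (t i)] i] = [set i | t i].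
    by apply/setP=> i; rewrite !inE ffunE; case: (t i).
  done.
- have -> : [set i | [ffun i => c (t i)] i] = ~: [set i | t i].
    by apply/setP=> i; rewrite !inE ffunE; case: (t i).
  have := cardsC [set i | t i]; rewrite card_ord; lia.
- have -> : [set i | [ffun i => c (t i)] i] = finset.set0.
    by apply/setP=> i; rewrite !inE ffunE; case: (t i).
  by rewrite cards0; lia.
Qed.

Lemma pres_unary h R (u : ppfun 1) :
  bclosed R -> Defs.total (mkpf u) -> @pres h R 1 u.
Proof.
move=> HR Hu M HM _.
pose c b := odflt false (u [ffun _ => b]).
have -> : [ffun i => odflt false (u (M i))] = [ffun i => c ([ffun i => M i ord0] i)].
  apply/ffunP=> i; rewrite !ffunE /c; congr (odflt false (u _)).
  by apply/ffunP=> j; rewrite ffunE (ord1 j).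
exact: HR.
Qed.

Definition flip n (i : 'I_n) (z : {ffun 'I_n -> bool}) : {ffun 'I_n -> bool} :=
  [ffun l => if l == i then ~~ z l else z l].

Lemma walk n (F : {ffun 'I_n -> bool} -> bool) d : forall x y : {ffun 'I_n -> bool},
  #|[set l | x l != y l]| = d -> F x != F y -> exists z i, F z != F (flip i z).
Proof.
elim: d => [|d IH] x y Hd Hne.
  have xy : x = y.
    apply/ffunP => l; apply/eqP; apply/negPn.
    have : l \notin [set l | x l != y l] by rewrite (cards0_eq Hd) inE.
    by rewrite inE.
  by rewrite xy eqxx in Hne.
have [l Hl] : exists l, l \in [set l | x l != y l].
  by apply/set0Pn; rewrite -card_gt0 Hd.
pose x' := flip l x.
case: (boolP (F x == F x')) => [/eqP Ex|Hx]; last by exists x, l.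
apply: (IH x' y); last by rewrite -Ex.
have -> : [set l' | x' l' != y l'] = [set l | x l != y l] :\ l.
  apply/setP => l'; rewrite !inE /x' /flip ffunE.
  case: (l' =P l) => [->|_] /=; last by [].
  by move: Hl; rewrite inE; case: (x l); case: (y l).
by move: Hd; rewrite (cardsD1 l) Hl add1n => -[].
Qed.

Definition M4 T (r1 r2 r3 r4 : T) (i : 'I_4) : T :=
  match nat_of_ord i with 0 => r1 | 1 => r2 | 2 => r3 | _ => r4 end.

Lemma rho4 n (f : ppfun n) : (forall x, f x <> None) -> pres rho f ->
  forall r1 r2 r3 r4 : {ffun 'I_n -> bool}, (forall l, r1 l = r2 l \/ r3 l = r4 l) ->
  f r1 = f r2 \/ f r3 = f r4.
Proof.
move=> Ht Hp r1 r2 r3 r4 H.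
have := Hp (M4 r1 r2 r3 r4).
rewrite /rho !ffunE /M4 !inordK //.
have E x y : odflt false (f x) = odflt false (f y) -> f x = f y.
  by move: (Ht x) (Ht y); case: (f x); case: (f y) => // a b _ _ /= ->.
move=> /(_ _ (fun i => Ht _)) [] ; first (by move=> j; rewrite /rho !ffunE /M4 !inordK //; exact: H).
- by move/E; left.
- by move/E; right.
Qed.

Lemma ess_unary k (f : ppfun k.+1) : (forall x, f x <> None) -> pres rho f ->
  exists i : 'I_k.+1, forall x y : {ffun 'I_k.+1 -> bool}, x i = y i -> f x = f y.
Proof.
move=> Ht Hp.
have R4 := rho4 Ht Hp.
pose F x := odflt false (f x).
have E x y : F x = F y -> f x = f y.
  by rewrite /F; move: (Ht x) (Ht y); case: (f x); case: (f y) => // a b _ _ /= ->.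
case: (boolP [exists x, exists y, F x != F y]).
- move=> /existsP[x /existsP[y Hxy]].
  have [z [i Hz]] := walk (erefl _) Hxy.
  exists i => a b Hab.
  have [] := R4 a b z (flip i z).
  - move=> l; rewrite /flip ffunE; case: (l =P i) => [->|_]; by [left|right].
  - by [].
  by move=> /(congr1 (odflt false)) E2; move: Hz; rewrite /F E2 eqxx.
- move=> /existsPn Hn; exists ord0 => x y _; apply: E.
  by move: (Hn x) => /existsPn /(_ y) /negPn /eqP.
Qed.

Lemma ess_unary_Omega1 k (f : ppfun k.+1) (i : 'I_k.+1) : (forall x, f x <> None) ->
  (forall x y : {ffun 'I_k.+1 -> bool}, x i = y i -> f x = f y) -> Omega1 (mkpf f).
Proof.
move=> Ht Hi C [[Hproj Hcomp] Htot] Hun.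
pose u : ppfun 1 := [ffun v : {ffun 'I_1 -> bool} => f [ffun _ => v ord0]].
have Eq : f = Defs.comp u (fun _ => Defs.proj i).
  apply/ffunP => x; rewrite [RHS]ffunE.
  case: ifP => [_|/negP[]]; last by apply/forallP => j; rewrite ffunE.
  rewrite ffunE; apply: Hi; by rewrite !ffunE.
rewrite Eq; apply: Hcomp => [|j]; last exact: Hproj.
apply: Hun; split => // v; rewrite ffunE; exact: Ht.
Qed.

Lemma exists_notin M (s : seq 'I_M) : size s < M -> exists y, y \notin s.
Proof.
move=> Hs; case: (boolP [exists y, y \notin s]) => [/existsP//|/existsPn H].
have : #|'I_M| <= #|s|.
  by apply: subset_leq_card; apply/fintype.subsetP => y _; move: (H y); rewrite negbK.
rewrite card_ord => Hc; have := leq_trans Hc (card_size s); by rewrite leqNgt Hs.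
Qed.


Lemma sum2 M (f : 'I_M -> nat) x y : x != y -> f x + f y <= \sum_i f i.
Proof.
move=> xy; rewrite (bigD1 x) //= (bigD1 y) /=; last by rewrite eq_sym.
by rewrite addnA leq_addr.
Qed.

Lemma sum3 M (f : 'I_M -> nat) x y z : x != y -> x != z -> y != z ->
  f x + f y + f z <= \sum_i f i.
Proof.
move=> xy xz yz; rewrite (bigD1 x) //= (bigD1 y) /=; last by rewrite eq_sym.
rewrite (bigD1 z) /=; last by rewrite eq_sym xz eq_sym yz.
by rewrite !addnA leq_addr.
Qed.

Lemma arith M q (B : 'I_M -> nat) : 5 <= M -> 7 <= q -> q != M ->
  \sum_i B i = q -> (forall a b, a != b -> Wq q (B a + B b)) ->
  forall x y z, x != y -> x != z -> y != z -> Wq q (B x + B y + B z).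
Proof.
move=> M5 q7 qM Hs HW x y z xy xz yz.
case: (boolP [exists a, B a == 0]).
- move=> /existsP[a0 /eqP Ha0].
  have W1 b : Wq q (B b).
    case: (b =P a0) => [->|/eqP ba]; first by rewrite Ha0; left.
    by have := HW _ _ ba; rewrite Ha0 addn0.
  have := sum3 B xy xz yz; rewrite Hs => H3.
  have := W1 x; have := W1 y; have := W1 z.
  have := HW _ _ xy; have := HW _ _ xz; have := HW _ _ yz.
  rewrite /Wq; lia.
- move=> /existsPn Hn.
  have B1 a : 1 <= B a by move: (Hn a); rewrite lt0n.
  have Hsum : \sum_i B i = \sum_i (B i - 1) + \sum_(i < M) 1.
    by rewrite -big_split /=; apply: eq_bigr => i _; rewrite subnK.
  rewrite sum1_card card_ord in Hsum.
  have All1 a : B a = 1.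
    have [b Hb] : exists b : 'I_M, b != a.
      have [b] : exists b, b \notin [:: a] by apply: exists_notin; rewrite /=; lia.
      by rewrite inE => Hb; exists b.
    have := sum2 (fun i => B i - 1) Hb; rewrite -/(\sum_i (B i - 1)) => H2.
    have := HW _ _ Hb; have := B1 a; have := B1 b; rewrite /Wq; lia.
  have : \sum_i B i = M.
    have -> : \sum_i B i = \sum_(i < M) 1 by apply: eq_bigr => i _; exact: All1.
    by rewrite sum1_card card_ord.
  move: qM; rewrite Hs => /eqP; lia.
Qed.

Ltac kill := repeat match goal with
 | h : is_true (?u != ?v) |- context [?u == ?v] => rewrite (negbTE h)
 | h : is_true (?u != ?v) |- context [?v == ?u] => rewrite [v == u]eq_sym (negbTE h)
end.
Lemma sep (T : eqType) (x1 x2 x3 x4 y : T) : y \notin [:: x1; x2; x3; x4] -> x1 != x2 -> x3 != x4 ->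
  exists a b, [/\ a != b, ((x1 == a) || (x1 == b)) != ((x2 == a) || (x2 == b))
                & ((x3 == a) || (x3 == b)) != ((x4 == a) || (x4 == b))].
Proof.
rewrite !inE !negb_or => /and4P[y1 y2 y3 y4] n12 n34.
have [e|n13] := eqVneq x1 x3.
  by subst x3; exists x1, y; kill; rewrite !eqxx /=; kill.
have [e|n14] := eqVneq x1 x4.
  by subst x4; exists x1, y; kill; rewrite !eqxx /=; kill.
have [e|n23] := eqVneq x2 x3.
  by subst x3; exists x1, x4; kill; rewrite !eqxx /=; kill.
by exists x1, x3; kill; rewrite !eqxx /=; kill.
Qed.

Lemma card_or q (P Q : pred 'I_q) : (forall i, ~~ (P i && Q i)) ->
  #|[set i | P i || Q i]| = #|[set i | P i]| + #|[set i | Q i]|.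
Proof.
move=> H; have -> : [set i | P i || Q i] = [set i | P i] :|: [set i | Q i].
  by apply/setP=> i; rewrite !inE.
rewrite cardsU; have -> : [set i | P i] :&: [set i | Q i] = finset.set0.
  by apply/setP=> i; rewrite !inE; apply/negbTE/H.
by rewrite cards0 subn0.
Qed.

Lemma disj2 (T : eqType) (x a b : T) : a != b -> ~~ ((x == a) && (x == b)).
Proof. by move=> ab; apply/negP => /andP[/eqP E1 /eqP E2]; rewrite -E1 -E2 eqxx in ab. Qed.

Lemma disj3 (T : eqType) (x a b c : T) : a != b -> a != c ->
  ~~ ((x == a) && ((x == b) || (x == c))).
Proof.
move=> ab ac; apply/negP => /andP[/eqP E1 /orP[] /eqP E2].
  by rewrite -E1 -E2 eqxx in ab.
by rewrite -E1 -E2 eqxx in ac.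
Qed.

Section G.
Variable m : nat.
Local Notation M := m.+1.
Local Notation N := (m.+1 * m.+1).

Lemma cd_lt (a b : 'I_M) : a * M + b < N.
Proof. have := ltn_ord a; have := ltn_ord b; nia. Qed.

Definition cd (a b : 'I_M) : 'I_N := Ordinal (cd_lt a b).

Lemma cd_div a b : cd a b %/ M = a.
Proof. by rewrite /= divnMDl // divn_small // addn0. Qed.
Lemma cd_mod a b : cd a b %% M = b.
Proof. by rewrite /= modnMDl modn_small. Qed.

Definition pt (x : 'I_M) : {ffun 'I_N -> bool} :=
  [ffun c : 'I_N => (c %/ M != c %% M) && ((x == c %/ M :> nat) || (x == c %% M :> nat))].

Lemma pt_cd x a b : pt x (cd a b) = (a != b) && ((x == a) || (x == b)).
Proof. by rewrite ffunE cd_div cd_mod. Qed.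

Hypothesis m6 : 6 <= m.

Lemma pt_inj : injective pt.
Proof.
move=> x z Hxz; apply/eqP; apply/negPn/negP => Hne.
have [y Hy] : exists y, y \notin [:: x; z] by apply: exists_notin; rewrite /=; lia.
move: Hy; rewrite !inE negb_or => /andP[Hyx Hyz].
have := congr1 (fun v : {ffun 'I_N -> bool} => v (cd x y)) Hxz; rewrite /= !pt_cd eqxx eq_sym Hyx /=.
by rewrite eq_sym (negbTE Hne) eq_sym (negbTE Hyz).
Qed.

Definition g : ppfun N :=
  [ffun v => if pick [pred x | v == pt x] is Some x then Some (x < 3) else None].

Lemma gE x : g (pt x) = Some (x < 3).
Proof.
rewrite ffunE; case: pickP => [y /= /eqP Hy|H]; first by rewrite (pt_inj Hy).
by move: (H x); rewrite /= eqxx.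
Qed.

Lemma gdom v : g v <> None -> exists x, v = pt x.
Proof.
rewrite ffunE; case: pickP => [y /= /eqP Hy|//]; by exists y.
Qed.


Lemma rows_pt h (R : 'I_h -> {ffun 'I_N -> bool}) :
  (forall i, g (R i) <> None) -> exists phi : 'I_h -> 'I_M, forall i, R i = pt (phi i).
Proof.
move=> Hd.
have H i : exists x, R i == pt x by have [x ->] := gdom (Hd i); exists x.
by exists (fun i => xchoose (H i)) => i; apply/eqP/(xchooseP (H i)).
Qed.

Lemma lt3 (x : 'I_M) : (x < 3) = [|| x == inord 0, x == inord 1 | x == inord 2].
Proof.
by rewrite -!val_eqE /= !inordK; lia.
Qed.

Lemma o_neq : [/\ (inord 0 : 'I_M) != inord 1, (inord 0 : 'I_M) != inord 2 & (inord 1 : 'I_M) != inord 2].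
Proof. by rewrite -!val_eqE /= !inordK //; lia. Qed.

Lemma card1 h (a : 'I_h) : #|[set i | i == a]| = 1.
Proof. by rewrite -(cards1 a); apply: eq_card => i; rewrite !inE. Qed.

Lemma g_pres_sgm q : 7 <= q -> q != M -> pres (sgm q) g.
Proof.
move=> q7 qM R HR Hd.
have [phi Hphi] := rows_pt Hd.
pose B a := #|[set i | phi i == a]|.
have Bsum : \sum_a B a = q.
  have -> : q = \sum_(i < q) 1 by rewrite sum1_card card_ord.
  rewrite (partition_big phi xpredT) //=; apply: eq_bigr => a _.
  by rewrite /B sum1dep_card.
have HW a b : a != b -> Wq q (B a + B b).
  move=> ab; have := HR (cd a b); rewrite /sgm.
  have -> : [set i | [ffun i => R i (cd a b)] i] = [set i | (phi i == a) || (phi i == b)].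
    by apply/setP => i; rewrite !inE ffunE Hphi pt_cd ab.
  by rewrite (card_or (fun i => disj2 (phi i) ab)).
rewrite /sgm.
have -> : [set i | [ffun i => odflt false (g (R i))] i] =
    [set i | (phi i == inord 0) || ((phi i == inord 1) || (phi i == inord 2))].
  by apply/setP=> i; rewrite !inE ffunE Hphi gE /= lt3.
have [n01 n02 n12] := o_neq.
rewrite (card_or (fun i => disj3 (phi i) n01 n02)) (card_or (fun i => disj2 (phi i) n12)).
rewrite addnA; apply: (arith (B := B)) => //; lia.
Qed.

Lemma cd_surj (j : 'I_N) : exists a b, j = cd a b.
Proof.
have Ha : j %/ M < M by rewrite ltn_divLR // (ltn_ord j).
have Hb : j %% M < M by rewrite ltn_pmod.
exists (Ordinal Ha), (Ordinal Hb); apply: val_inj => /=.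
by rewrite -divn_eq.
Qed.

Lemma g_not_sgm : ~ pres (sgm M) g.
Proof.
move=> H.
have Hc : forall j, sgm M [ffun i => pt i j].
  move=> j; have [a [b ->]] := cd_surj j; rewrite /sgm.
  have -> : [set i | [ffun i => pt i (cd a b)] i] = [set i | (a != b) && ((i == a) || (i == b))].
    by apply/setP=> i; rewrite !inE ffunE pt_cd.
  case: (eqVneq a b) => [->|ab] /=.
    left; apply/eqP; rewrite cards_eq0; apply/eqP/setP => i; by rewrite !inE.
  by rewrite (card_or (fun i => disj2 i ab)) !card1; right; left.
have Hd' : forall i, g (pt i) <> None by move=> i; rewrite gE.
move: (H _ Hc Hd'); rewrite /sgm.
have -> : [set i | [ffun i => odflt false (g (pt i))] i] =
    [set i | (i == inord 0) || ((i == inord 1) || (i == inord 2))].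
  by apply/setP=> i; rewrite !inE ffunE gE /= lt3.
have [n01 n02 n12] := o_neq.
rewrite (card_or (fun i => disj3 i n01 n02)) (card_or (fun i => disj2 i n12)) !card1.
rewrite /Wq; lia.
Qed.

Lemma g_pres_rho : pres rho g.
Proof.
move=> R HR Hd; have [phi Hphi] := rows_pt Hd.
have Hcol : forall a b, a != b ->
   ((phi (inord 0) == a) || (phi (inord 0) == b)) = ((phi (inord 1) == a) || (phi (inord 1) == b)) \/
   ((phi (inord 2) == a) || (phi (inord 2) == b)) = ((phi (inord 3) == a) || (phi (inord 3) == b)).
  by move=> a b ab; have := HR (cd a b); rewrite /rho !ffunE !Hphi !pt_cd ab.
rewrite /rho !(@ffunE _ _ (fun i => odflt false (g (R i)))) !Hphi !gE /=.
move: Hcol; move: (phi (inord 0)) (phi (inord 1)) (phi (inord 2)) (phi (inord 3)) => x1 x2 x3 x4 Hcol.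
case: (boolP ((x1 < 3) == (x2 < 3))) => [/eqP->|h12]; first by left.
case: (boolP ((x3 < 3) == (x4 < 3))) => [/eqP->|h34]; first by right.
exfalso.
have n12 : x1 != x2 by apply: contraNneq h12 => ->.
have n34 : x3 != x4 by apply: contraNneq h34 => ->.
have [y Hy] : exists y, y \notin [:: x1; x2; x3; x4] by apply: exists_notin => /=; lia.
have [a [b [ab d12 d34]]] := sep Hy n12 n34.
by case: (Hcol a b ab) => E; [rewrite E eqxx in d12 | rewrite E eqxx in d34].
Qed.

End G.

Definition XS (S : set nat) : set pfun := fun F =>
  pres rho (projT2 F) /\ forall p, S p -> pres (sgm (7 + p)) (projT2 F).

Lemma XS_pc S : partial_clone (XS S).
Proof.
split.
- move=> k i; split; [exact: pres_proj | move=> p _; exact: pres_proj].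
- move=> m n f gs [Hf1 Hf2] Hg; split.
  + by apply: pres_comp => // i; exact: (Hg i).1.
  + move=> p Sp; apply: pres_comp; [exact: Hf2 | move=> i; exact: (Hg i).2 p Sp].
Qed.

Lemma XS_strong S : strong_partial_clone (XS S).
Proof.
split; first exact: XS_pc.
move=> k f g' [H1 H2] Hr; split; first exact: pres_restr Hr H1.
move=> p Sp; exact: pres_restr Hr (H2 p Sp).
Qed.

Lemma total_comp m n (f : ppfun n.+1) (gs : 'I_n.+1 -> ppfun m.+1) :
  Defs.total (mkpf f) -> (forall i, Defs.total (mkpf (gs i))) ->
  Defs.total (mkpf (Defs.comp f gs)).
Proof.
move=> Hf Hg x; rewrite /= ffunE; case: ifP => [_|/negP[]]; first exact: Hf.
by apply/forallP => i; apply/eqP; exact: Hg.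
Qed.

Lemma total_proj k (i : 'I_k.+1) : Defs.total (mkpf (Defs.proj i)).
Proof. by move=> x; rewrite /= ffunE. Qed.

Lemma XS_total S f : (XS S f /\ Defs.total f) <-> Omega1 f.
Proof.
case: f => k f; split.
- move=> [[H1 _] Ht]; have [i Hi] := ess_unary Ht H1.
  exact: ess_unary_Omega1 Ht Hi.
- move=> HO; apply: (HO (fun F => XS S F /\ Defs.total F)).
  + split; first split.
    * move=> k' i; split; [exact: (XS_pc S).1 | exact: total_proj].
    * move=> m n f' gs [Hf Hft] Hg; split.
        by apply: (XS_pc S).2 => // i; exact: (Hg i).1.
      by apply: total_comp => // i; exact: (Hg i).2.
    * by move=> F [].
  + move=> [k' u] [/= Hk Hut]; subst k'; split => //; split.
      exact: (@pres_unary 4 rho u rho_closed Hut).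
    by move=> p _; exact: (@pres_unary _ _ u (@sgm_closed (7 + p)) Hut).
Qed.

Lemma XS_sep S p : ~ S p -> XS S (@mkpf ((6 + p) + (6 + p) * (6 + p).+1) (g (6 + p))).
Proof.
move=> nS; split; first exact: (@g_pres_rho (6 + p) (leq_addr _ _)).
move=> p' Sp'.
have pp : p' <> p by move=> E; rewrite E in Sp'.
apply: (@g_pres_sgm (6 + p) (leq_addr _ _)); first by lia.
by apply/eqP; lia.
Qed.

Lemma XS_nsep S p : S p -> ~ XS S (@mkpf ((6 + p) + (6 + p) * (6 + p).+1) (g (6 + p))).
Proof.
move=> Sp [_ H]; exact: (@g_not_sgm (6 + p) (leq_addr _ _)) (H p Sp).
Qed.

Lemma XS_inj : injective XS.
Proof.
move=> S T E; apply/funext => p; apply/propext; split => Hp.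
- case: (pselect (T p)) => // nT; exfalso.
  by apply: (XS_nsep Hp); rewrite E; exact: XS_sep.
- case: (pselect (S p)) => // nS; exfalso.
  by apply: (XS_nsep Hp); rewrite -E; exact: XS_sep.
Qed.

Local Open Scope classical_set_scope.
Local Open Scope card_scope.

Theorem mainTheorem9 : I_str Omega1 #= [set: set nat].
Proof.
apply/card_eqPle; split.
- pose f (X : set pfun) : set nat := pickle @` X.
  have finj : {in I_str Omega1 &, injective f}.
    move=> X Y _ _ E; apply/funext => F; apply/propext.
    split => HF.
    + have : f Y (pickle F) by rewrite -E; exists F.
      by case=> G YG /(pcan_inj pickleK) <-.
    + have : f X (pickle F) by rewrite E; exists F.
      by case=> G XG /(pcan_inj pickleK) <-.
  have := inj_card_eq finj; rewrite card_eq_le => /andP[_ H].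
  exact: card_le_trans H (card_leT _).
- have := @inj_card_eq _ _ [set: set nat] XS (in2W XS_inj).
  rewrite card_eq_le => /andP[_ H].
  apply: card_le_trans H _; apply: subset_card_le.
  move=> X [S _ <-]; split; first exact: XS_strong.
  exact: XS_total.
Qed.
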